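(* Let $F\subseteq\mathbb{R}^2$ be a self-similar set generated by an IFS $\Phi$ of contracting similarities satisfying the strong separation condition. Then $\dim_H(F\cap L)<1$ for every affine line $L\subseteq\mathbb{R}^2$.
   Context: SSC: the first-level cylinders $\phi_i(F)$ are pairwise disjoint. *)

(* Defs.v *)
From Stdlib Require Import Reals.
Open Scope R_scope.

Definition pt : Type := (R * R)%type.

Definition dist2 (p q : pt) : R :=
  sqrt (Rsqr (fst p - fst q) + Rsqr (snd p - snd q)).

Definition contracting_similarity (f : pt -> pt) (r : R) : Prop :=
  0 < r < 1 /\ forall p q, dist2 (f p) (f q) = r * dist2 p q.

Definition seq_compact (A : pt -> Prop) : Prop :=
  forall u : nat -> pt, (forall k, A (u k)) ->
  exists (g : nat -> nat) (l : pt),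
    (forall k, (g k < g (S k))%nat) /\ A l /\
    (forall eps, 0 < eps -> exists N, forall k, (N <= k)%nat -> dist2 (u (g k)) l < eps).

Definition is_attractor (n : nat) (phi : nat -> pt -> pt) (F : pt -> Prop) : Prop :=
  (exists p, F p) /\ seq_compact F /\
  (forall p, F p <-> exists i, (i < n)%nat /\ exists q, F q /\ p = phi i q).

Definition SSC (n : nat) (phi : nat -> pt -> pt) (F : pt -> Prop) : Prop :=
  forall i j, (i < n)%nat -> (j < n)%nat -> i <> j ->
  forall p q, F p -> F q -> phi i p <> phi j q.

Definition affine_line (a v : pt) : pt -> Prop :=
  fun p => exists t : R, p = (fst a + t * fst v, snd a + t * snd v).

Definition hausdorff_null (s : R) (A : pt -> Prop) : Prop :=
  forall delta eps, 0 < delta -> 0 < eps ->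
  exists (U : nat -> pt -> Prop) (d : nat -> R),
    (forall p, A p -> exists k, U k p) /\
    (forall k, 0 < d k <= delta) /\
    (forall k p q, U k p -> U k q -> dist2 p q <= d k) /\
    (forall N, sum_f_R0 (fun k => Rpower (d k) s) N <= eps).

Definition is_hausdorff_dim (A : pt -> Prop) (d : R) : Prop :=
  (forall s, 0 <= s -> hausdorff_null s A -> d <= s) /\
  (forall e, (forall s, 0 <= s -> hausdorff_null s A -> e <= s) -> e <= d).

(* Main.v *)
Require Import Defs.
From Stdlib Require Import Reals Lra Lia Psatz ZArith List ClassicalEpsilon IndefiniteDescription Classical.
Import ListNotations.
Open Scope R_scope.

Lemma dist2_nonneg p q : 0 <= dist2 p q.
Proof. unfold dist2; apply sqrt_pos. Qed.

Lemma dist2_sq p q : dist2 p q * dist2 p q = Rsqr (fst p - fst q) + Rsqr (snd p - snd q).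
Proof. unfold dist2; rewrite sqrt_sqrt; auto. apply Rplus_le_le_0_compat; apply Rle_0_sqr. Qed.

Lemma dist2_sym p q : dist2 p q = dist2 q p.
Proof. unfold dist2; f_equal; unfold Rsqr; ring. Qed.

Lemma dist2_refl p : dist2 p p = 0.
Proof. unfold dist2; rewrite !Rminus_diag, Rsqr_0, Rplus_0_l; apply sqrt_0. Qed.

Lemma dist2_eq0 p q : dist2 p q = 0 -> p = q.
Proof.
  intro H. pose proof (dist2_sq p q) as E. rewrite H in E. unfold Rsqr in E.
  destruct p as [p1 p2], q as [q1 q2]; simpl in *.
  pose proof (Rle_0_sqr (p1-q1)); pose proof (Rle_0_sqr (p2-q2)); unfold Rsqr in *.
  assert (A1 : (p1-q1)*(p1-q1) = 0) by lra. assert (A2 : (p2-q2)*(p2-q2) = 0) by lra.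
  apply Rmult_integral in A1; apply Rmult_integral in A2.
  assert (p1 = q1) by lra. assert (p2 = q2) by lra. subst; auto.
Qed.

Lemma sqrt_le_sq x y : 0 <= y -> x * x <= y * y -> sqrt (x*x) <= y.
Proof. intros. rewrite <- (sqrt_square y) by auto. apply sqrt_le_1_alt. nra. Qed.

Lemma dist2_tri p q r : dist2 p r <= dist2 p q + dist2 q r.
Proof.
  pose proof (dist2_sq p q); pose proof (dist2_sq q r); pose proof (dist2_sq p r).
  pose proof (dist2_nonneg p q); pose proof (dist2_nonneg q r); pose proof (dist2_nonneg p r).
  destruct p as [p1 p2], q as [q1 q2], r as [r1 r2]; simpl in *.
  unfold Rsqr in *.
  set (a := dist2 (p1,p2) (q1,q2)) in *. set (b := dist2 (q1,q2) (r1,r2)) in *.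
  set (c := dist2 (p1,p2) (r1,r2)) in *.
  assert (CS : ((p1-q1)*(q1-r1) + (p2-q2)*(q2-r2)) <= a*b).
  { assert (((p1-q1)*(q1-r1) + (p2-q2)*(q2-r2))^2 <= (a*b)^2).
    { replace ((a*b)^2) with ((a*a)*(b*b)) by ring. rewrite H, H0.
      pose proof (Rle_0_sqr ((p1-q1)*(q2-r2) - (p2-q2)*(q1-r1))). unfold Rsqr in *. nra. }
    apply Rsqr_incr_0_var; unfold Rsqr; try nra. }
  apply Rsqr_incr_0_var; unfold Rsqr; try nra.
Qed.

Definition lpt (a v : pt) (t : R) : pt := (fst a + t * fst v, snd a + t * snd v).
Definition nrm (v : pt) : R := sqrt (Rsqr (fst v) + Rsqr (snd v)).

Lemma nrm_pos v : v <> (0,0) -> 0 < nrm v.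
Proof.
  intro Hv. unfold nrm. apply sqrt_lt_R0. destruct v as [v1 v2]; simpl.
  destruct (Req_dec v1 0); destruct (Req_dec v2 0); subst; try congruence;
  unfold Rsqr; nra.
Qed.

Lemma dist2_lpt a v s t : dist2 (lpt a v s) (lpt a v t) = Rabs (s - t) * nrm v.
Proof.
  unfold dist2, nrm, lpt; simpl.
  replace (Rsqr (fst a + s * fst v - (fst a + t * fst v)) + Rsqr (snd a + s * snd v - (snd a + t * snd v)))
    with (Rsqr (s - t) * (Rsqr (fst v) + Rsqr (snd v))) by (unfold Rsqr; ring).
  rewrite sqrt_mult_alt by apply Rle_0_sqr. rewrite sqrt_Rsqr_abs; auto.
Qed.

Lemma Req_of_small x y : (forall e, 0 < e -> Rabs (x - y) < e) -> x = y.
Proof.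
  intro H. destruct (Req_dec x y); auto.
  assert (0 < Rabs (x - y)) by (apply Rabs_pos_lt; lra).
  specialize (H _ H1); lra.
Qed.

Lemma collinear p y q : dist2 p y + dist2 y q = dist2 p q -> 0 < dist2 p q ->
  y = (fst p + (dist2 p y / dist2 p q) * (fst q - fst p),
       snd p + (dist2 p y / dist2 p q) * (snd q - snd p)).
Proof.
  intros H Hc.
  pose proof (dist2_sq p y) as E1; pose proof (dist2_sq y q) as E2; pose proof (dist2_sq p q) as E3.
  destruct p as [p1 p2], q as [q1 q2], y as [y1 y2]; simpl in *.
  set (A := dist2 (p1,p2) (y1,y2)) in *. set (B := dist2 (y1,y2) (q1,q2)) in *.
  set (C := dist2 (p1,p2) (q1,q2)) in *. unfold Rsqr in *.
  set (u1 := y1 - p1) in *. set (u2 := y2 - p2) in *.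
  set (w1 := q1 - y1) in *. set (w2 := q2 - y2) in *.
  assert (E1' : A*A = u1*u1 + u2*u2) by (rewrite E1; unfold u1, u2; ring).
  assert (E3' : C*C = (u1+w1)*(u1+w1) + (u2+w2)*(u2+w2)) by (rewrite E3; unfold u1,u2,w1,w2; ring).
  assert (E2' : B*B = w1*w1 + w2*w2) by (rewrite E2; unfold w1,w2; ring).
  assert (D : u1*w1 + u2*w2 = A*B).
  { rewrite <- H in E3'. nra. }
  assert (Z : (B*u1 - A*w1)*(B*u1 - A*w1) + (B*u2 - A*w2)*(B*u2 - A*w2) = 0).
  { replace ((B*u1 - A*w1)*(B*u1 - A*w1) + (B*u2 - A*w2)*(B*u2 - A*w2))
      with (B*B*(u1*u1+u2*u2) + A*A*(w1*w1+w2*w2) - 2*A*B*(u1*w1+u2*w2)) by ring.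
    rewrite D, <- E1', <- E2'. ring. }
  pose proof (Rle_0_sqr (B*u1 - A*w1)); pose proof (Rle_0_sqr (B*u2 - A*w2)); unfold Rsqr in *.
  assert (Z1 : (B*u1 - A*w1)*(B*u1 - A*w1) = 0) by lra.
  assert (Z2 : (B*u2 - A*w2)*(B*u2 - A*w2) = 0) by lra.
  apply Rmult_integral in Z1; apply Rmult_integral in Z2.
  assert (F1 : C*u1 = A*(u1+w1)) by (rewrite <- H; destruct Z1; nra).
  assert (F2 : C*u2 = A*(u2+w2)) by (rewrite <- H; destruct Z2; nra).
  unfold u1, w1, u2, w2 in *.
  f_equal.
  - apply (Rmult_eq_reg_l C); [|lra]. field_simplify; [|lra].
    replace (C*y1) with (C*(y1-p1) + C*p1) by ring. rewrite F1. ring.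
  - apply (Rmult_eq_reg_l C); [|lra]. field_simplify; [|lra].
    replace (C*y2) with (C*(y2-p2) + C*p2) by ring. rewrite F2. ring.
Qed.

Lemma nat_arch x : exists m : nat, x < INR m.
Proof.
  destruct (archimed x) as [H1 H2].
  destruct (Z_lt_le_dec (up x) 0) as [Hz|Hz].
  - exists 0%nat. simpl. apply IZR_lt in Hz. lra.
  - exists (Z.to_nat (up x)). rewrite INR_IZR_INZ, Z2Nat.id by auto. lra.
Qed.

Lemma div_lt_of c X e : 0 < X -> 0 < e -> c / e < X -> c / X < e.
Proof.
  intros HX He H. apply (Rmult_lt_reg_r X); auto. unfold Rdiv. rewrite Rmult_assoc, Rinv_l, Rmult_1_r by lra.
  apply (Rmult_lt_compat_l e) in H; auto. unfold Rdiv in H.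
  rewrite <- Rmult_assoc, (Rmult_comm e c), Rmult_assoc, Rinv_r, Rmult_1_r in H by lra. lra.
Qed.

Lemma small_frac c e m K : 0 < e -> c / e < INR m -> (m <= K)%nat -> c / (INR K + 1) < e.
Proof.
  intros He Hm HK. apply le_INR in HK. pose proof (pos_INR K). apply div_lt_of; lra.
Qed.

Lemma mul_le_of_le_div a t l : 0 < a -> t <= l / a -> a * t <= l.
Proof.
  intros Ha H. apply (Rmult_le_compat_l a) in H; [|lra].
  replace (a * (l / a)) with l in H by (field; lra). auto.
Qed.

Lemma Rabs_bnd x z : Rabs x <= z -> -z <= x <= z.
Proof. intros H. pose proof (Rle_abs x). pose proof (Rle_abs (-x)). rewrite Rabs_Ropp in H1. lra. Qed.

Lemma Rabs_bnd_lt x z : Rabs x < z -> -z < x < z.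
Proof. intros H. pose proof (Rle_abs x). pose proof (Rle_abs (-x)). rewrite Rabs_Ropp in H1. lra. Qed.

Lemma absdiff x y z : 0 <= y -> Rabs (x - y) <= z -> Rabs (Rabs x - y) <= z.
Proof.
  intros Hy H. apply Rabs_bnd in H. apply Rabs_le.
  destruct (Rle_dec 0 x). { rewrite Rabs_right; lra. } rewrite Rabs_left; lra.
Qed.

Lemma lim_dist (u w : nat -> pt) U W D :
  (forall e, 0 < e -> exists N, forall k, (N <= k)%nat ->
     dist2 (u k) U < e /\ dist2 (w k) W < e /\ Rabs (dist2 (u k) (w k) - D) < e) ->
  dist2 U W = D.
Proof.
  intros H. apply Req_of_small. intros e He.
  destruct (H (e/3)) as [N HN]; [lra|]. destruct (HN N (le_n N)) as [H1 [H2 H3]].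
  pose proof (dist2_tri U (u N) W). pose proof (dist2_tri (u N) W (w N)).
  pose proof (dist2_tri (u N) U W). pose proof (dist2_tri U W (w N)).
  rewrite (dist2_sym U (u N)) in *. rewrite (dist2_sym W (w N)) in *.
  pose proof (dist2_tri (u N) (w N) W).
  apply Rabs_bnd_lt in H3. apply Rabs_def1; lra.
Qed.

Lemma div_le_self a b : 0 <= a -> 1 <= b -> a / b <= a.
Proof.
  intros Ha Hb. unfold Rdiv. rewrite <- (Rmult_1_r a) at 2. apply Rmult_le_compat_l; auto.
  rewrite <- Rinv_1. apply Rinv_le_contravar; lra.
Qed.

Lemma locate x h M t : 0 < h -> x <= t <= x + INR (S M) * h ->
  exists j, (j <= M)%nat /\ x + INR j * h <= t <= x + INR (S j) * h.
Proof.
  intros Hh. induction M as [|M IH]; intros Ht.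
  - exists 0%nat. split; [lia|]. simpl in *. lra.
  - destruct (Rle_dec t (x + INR (S M) * h)).
    + destruct IH as [j [Hj H]]; [lra|]. exists j; split; [lia|auto].
    + exists (S M). split; [lia|]. lra.
Qed.

Lemma pow_le1 x k : 0 <= x <= 1 -> x ^ k <= 1.
Proof. intros H. induction k; simpl; [lra|]. pose proof (pow_le x k (proj1 H)). nra. Qed.

Lemma Rpower_pos x s : 0 < Rpower x s.
Proof. unfold Rpower; apply exp_pos. Qed.

Lemma Rpower_geom x m s : 0 < x -> Rpower (x ^ m) s = (Rpower x s) ^ m.
Proof.
  intros Hx. rewrite <- (Rpower_pow m x Hx). rewrite Rpower_mult, Rmult_comm, <- Rpower_mult.
  apply Rpower_pow. apply Rpower_pos.
Qed.

Lemma count_sum L N : sum_f_R0 (fun m => if Nat.ltb m L then 1 else 0) N = INR (Nat.min (S N) L).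
Proof.
  induction N as [|N IH].
  - simpl. destruct L; simpl; auto.
  - simpl sum_f_R0. rewrite IH. destruct (Nat.ltb_spec (S N) L).
    + rewrite (Nat.min_l (S N) L) by lia. rewrite (Nat.min_l (S (S N)) L) by lia. rewrite (S_INR (S N)). ring.
    + rewrite (Nat.min_r (S (S N)) L) by lia. replace (Nat.min (S N) L) with L by lia. ring.
Qed.

Lemma geom_sum q N : 0 <= q < 1 -> sum_f_R0 (fun m => q ^ m) N <= 1 / (1 - q).
Proof.
  intros Hq. rewrite tech3 by lra. pose proof (pow_le q (S N) (proj1 Hq)).
  unfold Rdiv. apply Rmult_le_compat_r; [left; apply Rinv_0_lt_compat; lra| lra].
Qed.

Lemma small_pow x A e : 0 <= x < 1 -> 0 <= A -> 0 < e -> exists N, forall k, (N <= k)%nat -> A * x ^ k < e.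
Proof.
  intros Hx HA He. destruct (pow_lt_1_zero x ltac:(rewrite Rabs_right; lra) (e / (A + 1)) ltac:(apply Rdiv_lt_0_compat; lra)) as [N HN].
  exists N. intros k Hk. specialize (HN k Hk). rewrite Rabs_right in HN by (apply Rle_ge, pow_le; lra).
  pose proof (pow_le x k (proj1 Hx)).
  apply (Rmult_lt_compat_l (A + 1)) in HN; [|lra]. replace ((A + 1) * (e / (A + 1))) with e in HN by (field; lra). nra.
Qed.

Lemma fin1 (Q : nat -> R -> Prop) N :
  (forall i d d', Q i d -> 0 < d' <= d -> Q i d') ->
  (forall i, (i < N)%nat -> exists d, 0 < d /\ Q i d) ->
  exists d, 0 < d /\ forall i, (i < N)%nat -> Q i d.
Proof.
  intros Hm. induction N as [|N IH]; intros H.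
  - exists 1; split; [lra| intros; lia].
  - destruct IH as [d1 [Hd1 H1]]. { intros; apply H; lia. }
    destruct (H N) as [d2 [Hd2 H2]]; [lia|].
    exists (Rmin d1 d2); split. { apply Rmin_glb_lt; auto. }
    intros i Hi. destruct (Nat.eq_dec i N).
    + subst. apply (Hm _ d2); auto. split; [apply Rmin_glb_lt; auto| apply Rmin_r].
    + apply (Hm _ d1); [apply H1; lia|]. split; [apply Rmin_glb_lt; auto| apply Rmin_l].
Qed.

Lemma incr_ge (g : nat -> nat) : (forall k, (g k < g (S k))%nat) -> forall k, (k <= g k)%nat.
Proof. intros H k; induction k; [lia| specialize (H k); lia]. Qed.

Definition conv (u : nat -> pt) (l : pt) := forall e, 0 < e -> exists N, forall k, (N <= k)%nat -> dist2 (u k) l < e.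

Lemma conv_sub u l g : conv u l -> (forall k, (g k < g (S k))%nat) -> conv (fun k => u (g k)) l.
Proof.
  intros H Hg e He. destruct (H e He) as [N HN]. exists N. intros k Hk.
  apply HN. pose proof (incr_ge g Hg k). lia.
Qed.

Lemma conv_unique u l l' : conv u l -> conv u l' -> l = l'.
Proof.
  intros H1 H2. apply dist2_eq0. apply Req_of_small. intros e He.
  destruct (H1 (e/2)) as [N1 HN1]; [lra|]. destruct (H2 (e/2)) as [N2 HN2]; [lra|].
  specialize (HN1 (N1+N2)%nat ltac:(lia)). specialize (HN2 (N1+N2)%nat ltac:(lia)).
  pose proof (dist2_tri l (u (N1+N2)%nat) l') as H. rewrite (dist2_sym l (u (N1+N2)%nat)) in H.
  pose proof (dist2_nonneg l l'). rewrite Rminus_0_r, Rabs_right by lra. lra.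
Qed.

Section Main.
Variable n : nat.
Variable phi : nat -> pt -> pt.
Variable r : nat -> R.
Variable F : pt -> Prop.
Hypothesis Hsim : forall i, (i < n)%nat -> contracting_similarity (phi i) (r i).
Hypothesis HF : is_attractor n phi F.
Hypothesis Hssc : SSC n phi F.

Lemma phi_dist i p q : (i < n)%nat -> dist2 (phi i p) (phi i q) = r i * dist2 p q.
Proof. intros Hi; apply (Hsim i Hi). Qed.
Lemma r_bounds i : (i < n)%nat -> 0 < r i < 1.
Proof. intros Hi; apply (Hsim i Hi). Qed.

Lemma F_phi i p : (i < n)%nat -> F p -> F (phi i p).
Proof. intros Hi Hp. destruct HF as [_ [_ H]]. apply H. eauto. Qed.

Lemma F_dec p : F p -> exists i, (i < n)%nat /\ exists q, F q /\ p = phi i q.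
Proof. intros Hp. destruct HF as [_ [_ H]]. apply H; auto. Qed.

Lemma F_cpt u : (forall k, F (u k)) -> exists g l, (forall k, (g k < g (S k))%nat) /\ F l /\ conv (fun k => u (g k)) l.
Proof. intros H. destruct HF as [_ [Hc _]]. destruct (Hc u H) as (g & l & H1 & H2 & H3). exists g, l. auto. Qed.

Lemma F_closed u l : (forall k, F (u k)) -> conv u l -> F l.
Proof.
  intros Hu Hc. destruct (F_cpt u Hu) as (g & l' & Hg & Hl' & Hc').
  replace l with l'; auto. apply (conv_unique (fun k => u (g k))); auto. apply conv_sub; auto.
Qed.

Lemma F_bounded : exists B, 0 < B /\ forall p q, F p -> F q -> dist2 p q <= B.
Proof.
  destruct HF as [[p0 Hp0] _].
  assert (exists B, forall q, F q -> dist2 q p0 <= B) as [B HB].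
  { apply NNPP. intro Hn.
    assert (forall k : nat, exists q, F q /\ INR k < dist2 q p0).
    { intro k. apply NNPP; intro H'. apply Hn. exists (INR k). intros q Hq.
      apply Rnot_lt_le. intro. apply H'; eauto. }
    destruct (functional_choice _ H) as [u Hu].
    destruct (F_cpt u (fun k => proj1 (Hu k))) as (g & l & Hg & Hl & Hc).
    destruct (Hc 1) as [N HN]; [lra|].
    destruct (nat_arch (dist2 l p0 + 1)) as [m Hm].
    specialize (HN (N + m)%nat ltac:(lia)).
    pose proof (proj2 (Hu (g (N+m)%nat))).
    pose proof (incr_ge g Hg (N+m)%nat).
    assert (INR m <= INR (g (N+m)%nat)) by (apply le_INR; lia).
    pose proof (dist2_tri (u (g (N+m)%nat)) l p0). lra. }
  exists (2 * Rabs B + 1). split. { pose proof (Rabs_pos B); lra. }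
  intros p q Hp Hq. pose proof (HB p Hp); pose proof (HB q Hq).
  pose proof (dist2_tri p p0 q). rewrite (dist2_sym p0 q) in H1.
  pose proof (Rle_abs B). lra.
Qed.

Lemma rmin_ex : exists rm, 0 < rm /\ forall i, (i < n)%nat -> rm <= r i.
Proof.
  apply (fin1 (fun i d => d <= r i)). { intros; lra. }
  intros i Hi. exists (r i). pose proof (r_bounds i Hi). split; lra.
Qed.

Lemma rmax_ex : exists rM, 0 < rM < 1 /\ forall i, (i < n)%nat -> r i <= rM.
Proof.
  destruct (fin1 (fun i e => e <= 1/2 /\ r i <= 1 - e) n) as [e [He H]].
  { intros; lra. }
  { intros i Hi. exists (Rmin (1 - r i) (1/2)). pose proof (r_bounds i Hi).
    pose proof (Rmin_l (1 - r i) (1/2)). pose proof (Rmin_r (1 - r i) (1/2)).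
    split; [apply Rmin_glb_lt; lra| lra]. }
  exists (1 - e). destruct n as [|n'].
  - split; [|intros; lia]. split; try lra.
    destruct HF as [[p Hp] [_ H3]]. apply H3 in Hp. destruct Hp as [i [Hi _]]. lia.
  - destruct (H 0%nat ltac:(lia)). split; [split; lra|]. intros i Hi; apply H; auto.
Qed.

Lemma sep_pair i j : (i < n)%nat -> (j < n)%nat -> i <> j ->
  exists d, 0 < d /\ forall p q, F p -> F q -> d <= dist2 (phi i p) (phi j q).
Proof.
  intros Hi Hj Hij. apply NNPP; intro Hn.
  assert (forall k : nat, exists pq : pt * pt, F (fst pq) /\ F (snd pq) /\
            dist2 (phi i (fst pq)) (phi j (snd pq)) < 1 / (INR k + 1)).
  { intro k. apply NNPP; intro H'. apply Hn. exists (1 / (INR k + 1)).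
    split. { pose proof (pos_INR k). apply Rdiv_lt_0_compat; lra. }
    intros p q Hp Hq. apply Rnot_lt_le. intro. apply H'. exists (p, q); simpl; auto. }
  destruct (functional_choice _ H) as [u Hu].
  destruct (F_cpt (fun k => fst (u k)) (fun k => proj1 (Hu k))) as (g1 & ps & Hg1 & Hps & Hc1).
  destruct (F_cpt (fun k => snd (u (g1 k))) (fun k => proj1 (proj2 (Hu (g1 k))))) as (g2 & qs & Hg2 & Hqs & Hc2).
  apply (Hssc i j Hi Hj Hij ps qs Hps Hqs).
  apply dist2_eq0. apply Req_of_small. intros e He.
  pose proof (conv_sub _ _ _ Hc1 Hg2) as Hc1'.
  destruct (Hc1' (e/3)) as [N1 HN1]; [lra|]. destruct (Hc2 (e/3)) as [N2 HN2]; [lra|].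
  destruct (nat_arch (3/e)) as [m Hm].
  set (k := (N1 + N2 + m)%nat).
  specialize (HN1 k ltac:(unfold k; lia)). specialize (HN2 k ltac:(unfold k; lia)). simpl in HN1, HN2.
  set (K := g1 (g2 k)). fold K in HN1, HN2.
  assert (HK : (m <= K)%nat). { unfold K. pose proof (incr_ge g1 Hg1 (g2 k)). pose proof (incr_ge g2 Hg2 k). unfold k in *; lia. }
  destruct (Hu K) as [_ [_ Hd]].
  assert (1 / (INR K + 1) < e / 3).
  { apply (small_frac _ _ m); auto; try lra. replace (1/(e/3)) with (3/e) by (field; lra). auto. }
  pose proof (dist2_tri (phi i ps) (phi i (fst (u K))) (phi j qs)).
  pose proof (dist2_tri (phi i (fst (u K))) (phi j (snd (u K))) (phi j qs)).
  rewrite phi_dist in H1 by auto. rewrite phi_dist in H2 by auto.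
  pose proof (r_bounds i Hi). pose proof (r_bounds j Hj).
  rewrite dist2_sym in HN1. pose proof (dist2_nonneg ps (fst (u K))).
  pose proof (dist2_nonneg (snd (u K)) qs).
  pose proof (dist2_nonneg (phi i ps) (phi j qs)).
  rewrite Rminus_0_r, Rabs_right by lra.
  assert (r i * dist2 ps (fst (u K)) <= dist2 ps (fst (u K))) by nra.
  assert (r j * dist2 (snd (u K)) qs <= dist2 (snd (u K)) qs) by nra.
  lra.
Qed.

Lemma sep_ex : exists d, 0 < d /\ forall i j, (i < n)%nat -> (j < n)%nat -> i <> j ->
  forall p q, F p -> F q -> d <= dist2 (phi i p) (phi j q).
Proof.
  destruct (fin1 (fun i d => (i < n)%nat -> forall j, (j < n)%nat -> i <> j ->
     forall p q, F p -> F q -> d <= dist2 (phi i p) (phi j q)) n) as [d [Hd H]].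
  { intros i d d' H1 H2 Hi j Hj Hij p q Hp Hq. specialize (H1 Hi j Hj Hij p q Hp Hq). lra. }
  { intros i Hi.
    destruct (fin1 (fun j d => i <> j -> forall p q, F p -> F q -> d <= dist2 (phi i p) (phi j q)) n) as [d [Hd H]].
    { intros j d d' H1 H2 Hij p q Hp Hq. specialize (H1 Hij p q Hp Hq). lra. }
    { intros j Hj. destruct (Nat.eq_dec i j).
      - exists 1. split; [lra| intros; congruence].
      - destruct (sep_pair i j Hi Hj n0) as [d [Hd H]]. exists d; split; auto. }
    exists d. split; [auto|]. intros _ j Hj Hij. apply H; auto. }
  exists d. split; [auto|]. intros i j Hi Hj. apply H; auto.
Qed.

Definition Seg (l : R) := exists G : R -> pt, (forall t, 0 <= t <= l -> F (G t)) /\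
  (forall s t, 0 <= s <= l -> 0 <= t <= l -> dist2 (G s) (G t) = Rabs (s - t)).

Lemma Seg_mono l l' : Seg l -> l' <= l -> Seg l'.
Proof.
  intros [G [H1 H2]] Hl. exists G. split.
  - intros t Ht; apply H1; lra.
  - intros s t Hs Ht; apply H2; lra.
Qed.

Lemma Seg_step l : 0 < l -> Seg l -> exists i, (i < n)%nat /\ Seg (l / r i).
Proof.
  intros Hl [G [HG1 HG2]].
  destruct sep_ex as [d [Hd Hsep]].
  destruct (F_dec (G 0) (HG1 0 ltac:(lra))) as [i [Hi [y0 [Hy0 E0]]]].
  assert (Hc : forall j : nat, forall t, 0 <= t <= l -> t <= INR j * (d/2) -> exists y, F y /\ G t = phi i y).
  { induction j as [|j IH]; intros t Ht Htj.
    - simpl in Htj. replace t with 0 by lra. eauto.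
    - rewrite S_INR in Htj. destruct (Rle_dec t (INR j * (d/2))) as [Hle|Hgt]; [apply IH; auto|].
      pose proof (pos_INR j).
      destruct (IH (INR j * (d/2))) as [y' [Hy' E']]. { split; [nra|lra]. } { lra. }
      destruct (F_dec (G t) (HG1 t Ht)) as [i' [Hi' [z [Hz Ez]]]].
      destruct (Nat.eq_dec i' i). { subst; eauto. }
      exfalso. specialize (Hsep i i' Hi Hi' (not_eq_sym n0) y' z Hy' Hz).
      rewrite <- E', <- Ez in Hsep. rewrite HG2 in Hsep; try (split; nra); try lra.
      rewrite Rabs_left1 in Hsep; lra. }
  destruct (nat_arch (l / (d/2))) as [m Hm].
  assert (Hall : forall t, 0 <= t <= l -> exists y, F y /\ G t = phi i y).
  { intros t Ht. apply (Hc m); auto.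
    apply (Rmult_lt_compat_r (d/2)) in Hm; [|lra]. field_simplify in Hm; lra. }
  pose proof (r_bounds i Hi) as Hri.
  set (H := fun t => epsilon (inhabits (0,0)) (fun y => F y /\ G (r i * t) = phi i y)).
  assert (HH : forall t, 0 <= t <= l / r i -> F (H t) /\ G (r i * t) = phi i (H t)).
  { intros t Ht. unfold H. apply epsilon_spec. apply Hall.
    split; [nra|]. apply mul_le_of_le_div; lra. }
  exists i. split; auto. exists H. split.
  - intros t Ht; apply HH; auto.
  - intros s t Hs Ht. destruct (HH s Hs) as [_ Es]. destruct (HH t Ht) as [_ Et].
    assert (r i * dist2 (H s) (H t) = r i * Rabs (s - t)).
    { rewrite <- phi_dist by auto. rewrite <- Es, <- Et. rewrite HG2.
      - replace (r i * s - r i * t) with (r i * (s - t)) by ring. rewrite Rabs_mult, Rabs_right; lra.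
      - split; [nra|]. apply mul_le_of_le_div; lra.
      - split; [nra|]. apply mul_le_of_le_div; lra. }
    apply Rmult_eq_reg_l in H0; lra.
Qed.

Lemma bernoulli x m : 0 <= x -> 1 + INR m * x <= (1 + x) ^ m.
Proof.
  intros Hx. induction m. { simpl; lra. }
  rewrite S_INR. simpl. pose proof (pos_INR m). nra.
Qed.

Lemma no_seg l : 0 < l -> ~ Seg l.
Proof.
  intros Hl HS.
  destruct rmax_ex as [rM [HrM HrMi]].
  assert (Hit : forall m, Seg (l * (1 / rM) ^ m)).
  { induction m. { simpl. replace (l * 1) with l by ring. auto. }
    assert (0 < l * (1 / rM) ^ m). { apply Rmult_lt_0_compat; auto. apply pow_lt. apply Rdiv_lt_0_compat; lra. }
    destruct (Seg_step _ H IHm) as [i [Hi HSi]]. apply (Seg_mono _ _ HSi).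
    pose proof (HrMi i Hi). pose proof (r_bounds i Hi).
    replace (l * (1 / rM) ^ S m) with (l * (1 / rM) ^ m / rM) by (simpl; field; lra).
    unfold Rdiv at 1 3. apply Rmult_le_compat_l; [lra|]. apply Rinv_le_contravar; lra. }
  destruct F_bounded as [B [HB HBd]].
  set (x := 1 / rM - 1).
  assert (Hx : 0 < x). { unfold x. assert (1 < 1 / rM). { apply (Rmult_lt_reg_r rM); [lra|]. field_simplify; lra. } lra. }
  destruct (nat_arch (B / (l * x))) as [m Hm].
  destruct (Hit m) as [G [HG1 HG2]].
  set (L := l * (1 / rM) ^ m) in *.
  assert (HL : l * (1 + INR m * x) <= L).
  { unfold L. apply Rmult_le_compat_l; [lra|]. replace (1 / rM) with (1 + x) by (unfold x; ring). apply bernoulli; lra. }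
  assert (B < l * (1 + INR m * x)).
  { apply (Rmult_lt_compat_r (l * x)) in Hm; [|nra]. field_simplify in Hm; nra. }
  assert (0 <= L) by nra.
  pose proof (HBd (G 0) (G L) (HG1 0 ltac:(lra)) (HG1 L ltac:(lra))).
  rewrite HG2 in H1 by lra. rewrite Rabs_left1 in H1 by lra. lra.
Qed.

Lemma no_dense eps : 0 < eps -> exists c, 0 < c /\ forall (S : R -> Prop) (g : R -> pt),
  (forall s, S s -> -eps <= s <= eps /\ F (g s)) ->
  (forall s t, S s -> S t -> dist2 (g s) (g t) = Rabs (s - t)) ->
  exists al, -eps <= al /\ al + c <= eps /\ forall s, al <= s <= al + c -> ~ S s.
Proof.
  intros He. apply NNPP; intro Hn.
  set (c := fun k : nat => eps / (INR k + 1)).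
  assert (Hc : forall k, 0 < c k /\ c k <= eps).
  { intro k. pose proof (pos_INR k). unfold c. split; [apply Rdiv_lt_0_compat; lra| apply div_le_self; lra]. }
  assert (Hsmall : forall e, 0 < e -> exists m, forall K, (m <= K)%nat -> c K < e).
  { intros e Hee. destruct (nat_arch (eps / e)) as [m Hm]. exists m. intros K HK. unfold c.
    apply (small_frac _ _ m); auto. }
  assert (HD : forall k, exists Sg : (R -> Prop) * (R -> pt),
     (forall s, fst Sg s -> -eps <= s <= eps /\ F (snd Sg s)) /\
     (forall s t, fst Sg s -> fst Sg t -> dist2 (snd Sg s) (snd Sg t) = Rabs (s - t)) /\
     (forall al, -eps <= al -> al + c k <= eps -> exists s, al <= s <= al + c k /\ fst Sg s)).
  { intro k. apply NNPP; intro H'. apply Hn. exists (c k). split; [apply Hc|].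
    intros S g H1 H2. apply NNPP; intro H3. apply H'. exists (S, g). simpl.
    split; [auto| split; [auto|]]. intros al Ha1 Ha2. apply NNPP; intro H4. apply H3.
    exists al. split; [auto| split; [auto|]]. intros s Hs HSs. apply H4. eauto. }
  destruct (functional_choice _ HD) as [Sg HSg].
  set (S := fun k => fst (Sg k)). set (G := fun k => snd (Sg k)).
  assert (HB : forall k s, S k s -> -eps <= s <= eps) by (intros k s Hs; apply (proj1 (HSg k)); auto).
  assert (HFs : forall k s, S k s -> F (G k s)) by (intros k s Hs; apply (proj1 (HSg k)); auto).
  assert (HDs : forall k s t, S k s -> S k t -> dist2 (G k s) (G k t) = Rabs (s - t))
    by (intros k s t Hs Ht; apply (proj1 (proj2 (HSg k))); auto).
  assert (Hdense : forall k al, -eps <= al -> al + c k <= eps -> exists s, al <= s <= al + c k /\ S k s)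
    by (intros k; apply (proj2 (proj2 (HSg k)))).
  assert (Ha : forall k, exists a, -eps <= a <= -eps + c k /\ S k a).
  { intro k. destruct (Hc k). destruct (Hdense k (-eps)) as [s Hs]; try lra. exists s; auto. }
  assert (Hb : forall k, exists b, eps - c k <= b <= eps /\ S k b).
  { intro k. destruct (Hc k). destruct (Hdense k (eps - c k)) as [s Hs]; try lra.
    exists s. destruct Hs as [[H1 H2] H3]. pose proof (HB _ _ H3). split; [split|]; auto; lra. }
  destruct (functional_choice _ Ha) as [a Ha']. destruct (functional_choice _ Hb) as [b Hb'].
  set (P := fun k => G k (a k)). set (Q := fun k => G k (b k)).
  destruct (F_cpt P (fun k => HFs k (a k) (proj2 (Ha' k)))) as (g1 & p & Hg1 & Fp & Hc1).
  destruct (F_cpt (fun k => Q (g1 k)) (fun k => HFs _ (b (g1 k)) (proj2 (Hb' (g1 k))))) as (g2 & q & Hg2 & Fq & Hc2).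
  pose proof (conv_sub _ _ _ Hc1 Hg2) as Hc1'. simpl in Hc1'.
  assert (Hpq : dist2 p q = 2 * eps).
  { apply (lim_dist (fun k => P (g1 (g2 k))) (fun k => Q (g1 (g2 k)))).
    intros e Hee. destruct (Hc1' e Hee) as [N1 HN1]. destruct (Hc2 e Hee) as [N2 HN2].
    destruct (Hsmall (e/2)) as [m Hm]; [lra|].
    exists (N1 + N2 + m)%nat. intros k Hk. split; [apply HN1; lia| split; [apply HN2; lia|]].
    set (K := g1 (g2 k)).
    assert (HK : (m <= K)%nat). { unfold K. pose proof (incr_ge g1 Hg1 (g2 k)). pose proof (incr_ge g2 Hg2 k). lia. }
    specialize (Hm K HK). destruct (Ha' K) as [HaK HSa]. destruct (Hb' K) as [HbK HSb].
    unfold P, Q. rewrite HDs by auto. rewrite (Rabs_minus_sym (a K)).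
    apply Rle_lt_trans with (2 * c K). { apply absdiff; [lra|]. apply Rabs_le. lra. } lra. }
  assert (Hy : forall t, -eps <= t <= eps -> exists y, F y /\ dist2 y p = t + eps /\ dist2 y q = eps - t).
  { intros t Ht.
    assert (Hs : forall k, exists s, Rabs (s - t) <= c k /\ S k s).
    { intro k. destruct (Hc k). destruct (Rle_dec (-eps) (t - c k)).
      - destruct (Hdense k (t - c k)) as [s [Hs1 Hs2]]; try lra. exists s. split; auto. apply Rabs_le. lra.
      - destruct (Hdense k (-eps)) as [s [Hs1 Hs2]]; try lra. exists s. split; auto. apply Rabs_le. lra. }
    destruct (functional_choice _ Hs) as [s Hs'].
    set (Y := fun k => G (g1 (g2 k)) (s (g1 (g2 k)))).
    destruct (F_cpt Y (fun k => HFs _ _ (proj2 (Hs' (g1 (g2 k)))))) as (ps & y & Hps & Fy & HcY).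
    exists y. split; auto.
    pose proof (conv_sub _ _ _ Hc1' Hps) as HcP. pose proof (conv_sub _ _ _ Hc2 Hps) as HcQ. simpl in HcP, HcQ.
    assert (Hidx : forall k, (k <= g1 (g2 (ps k)))%nat).
    { intro k. pose proof (incr_ge g1 Hg1 (g2 (ps k))). pose proof (incr_ge g2 Hg2 (ps k)). pose proof (incr_ge ps Hps k). lia. }
    split.
    - apply (lim_dist (fun k => Y (ps k)) (fun k => P (g1 (g2 (ps k))))).
      intros e Hee. destruct (HcY e Hee) as [N1 HN1]. destruct (HcP e Hee) as [N2 HN2].
      destruct (Hsmall (e/2)) as [m Hm]; [lra|].
      exists (N1 + N2 + m)%nat. intros k Hk. split; [apply HN1; lia| split; [apply HN2; lia|]].
      set (K := g1 (g2 (ps k))). specialize (Hm K ltac:(pose proof (Hidx k); unfold K; lia)).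
      destruct (Ha' K) as [HaK HSa]. destruct (Hs' K) as [HsK HSs].
      unfold Y, P. fold K. rewrite HDs by auto. apply Rabs_bnd in HsK.
      apply Rle_lt_trans with (2 * c K). { apply absdiff; [lra|]. apply Rabs_le. lra. } lra.
    - apply (lim_dist (fun k => Y (ps k)) (fun k => Q (g1 (g2 (ps k))))).
      intros e Hee. destruct (HcY e Hee) as [N1 HN1]. destruct (HcQ e Hee) as [N2 HN2].
      destruct (Hsmall (e/2)) as [m Hm]; [lra|].
      exists (N1 + N2 + m)%nat. intros k Hk. split; [apply HN1; lia| split; [apply HN2; lia|]].
      set (K := g1 (g2 (ps k))). specialize (Hm K ltac:(pose proof (Hidx k); unfold K; lia)).
      destruct (Hb' K) as [HbK HSb]. destruct (Hs' K) as [HsK HSs].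
      unfold Y, Q. fold K. rewrite HDs by auto. apply Rabs_bnd in HsK. rewrite (Rabs_minus_sym (s K)).
      apply Rle_lt_trans with (2 * c K). { apply absdiff; [lra|]. apply Rabs_le. lra. } lra. }
  apply (no_seg (2 * eps)); [lra|].
  set (v := (fst q - fst p, snd q - snd p)).
  exists (fun tau => lpt p v (tau / (2 * eps))). split.
  - intros tau Htau. destruct (Hy (tau - eps)) as [y [Fy [Hyp Hyq]]]; [lra|].
    assert (Hcol : y = (fst p + (dist2 p y / dist2 p q) * (fst q - fst p),
                       snd p + (dist2 p y / dist2 p q) * (snd q - snd p))).
    { apply collinear; [|lra]. rewrite (dist2_sym p y), Hyp, Hyq, Hpq. ring. }
    rewrite (dist2_sym p y), Hyp, Hpq in Hcol.
    replace (lpt p v (tau / (2 * eps))) with y; auto.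
    rewrite Hcol. unfold lpt, v; simpl. f_equal; field; lra.
  - intros s t Hs Ht. rewrite dist2_lpt.
    replace (nrm v) with (dist2 q p) by reflexivity. rewrite dist2_sym, Hpq.
    replace (s / (2 * eps) - t / (2 * eps)) with ((s - t) * / (2 * eps)) by (field; lra).
    rewrite Rabs_mult, (Rabs_right (/ (2 * eps))).
    + field; lra.
    + left. apply Rinv_0_lt_compat; lra.
Qed.

Fixpoint phiw (w : list nat) (p : pt) : pt :=
  match w with nil => p | i :: w' => phi i (phiw w' p) end.
Fixpoint rw (w : list nat) : R :=
  match w with nil => 1 | i :: w' => r i * rw w' end.
Definition valid (w : list nat) := Forall (fun i => (i < n)%nat) w.

Lemma phiw_dist w p q : valid w -> dist2 (phiw w p) (phiw w q) = rw w * dist2 p q.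
Proof.
  induction w as [|i w IH]; intros Hw; simpl. { ring. }
  inversion Hw; subst. rewrite phi_dist by auto. rewrite IH by auto. ring.
Qed.

Lemma rw_bnd w : valid w -> 0 < rw w <= 1.
Proof.
  induction w as [|i w IH]; intros Hw; simpl. { lra. }
  inversion Hw; subst. destruct (IH H2). pose proof (r_bounds i H1). split; nra.
Qed.

Lemma F_phiw w p : valid w -> F p -> F (phiw w p).
Proof.
  induction w as [|i w IH]; intros Hw Hp; simpl; auto. inversion Hw; subst. apply F_phi; auto.
Qed.

Lemma sep_word d : 0 < d -> (forall i j, (i < n)%nat -> (j < n)%nat -> i <> j ->
  forall p q, F p -> F q -> d <= dist2 (phi i p) (phi j q)) ->
  forall w, valid w -> forall y z, F y -> F z -> dist2 (phiw w y) z < rw w * d ->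
  exists y', F y' /\ z = phiw w y'.
Proof.
  intros Hd Hsep w. induction w as [|i w IH]; intros Hw y z Hy Hz Hdz.
  - exists z; auto.
  - inversion Hw; subst. simpl in Hdz.
    destruct (F_dec z Hz) as [j [Hj [z1 [Hz1 E]]]]. subst z.
    destruct (rw_bnd w H2) as [Hr1 Hr2]. pose proof (r_bounds i H1).
    destruct (Nat.eq_dec i j) as [<-|Hij].
    + rewrite phi_dist in Hdz by auto.
      assert (dist2 (phiw w y) z1 < rw w * d).
      { apply (Rmult_lt_reg_l (r i)); lra. }
      destruct (IH H2 y z1 Hy Hz1 H0) as [y' [Hy' E]]. exists y'. split; auto. simpl. rewrite E; auto.
    + exfalso. specialize (Hsep i j H1 Hj Hij (phiw w y) z1 (F_phiw w y H2 Hy) Hz1).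
      assert (r i * rw w * d <= d). { assert (r i * rw w <= 1) by nra. nra. }
      lra.
Qed.

Lemma address rm rM : 0 < rm < 1 -> (forall i, (i < n)%nat -> rm <= r i) -> 0 < rM < 1 -> (forall i, (i < n)%nat -> r i <= rM) ->
  forall m x, F x -> forall rho, rM ^ m < rho <= 1 ->
  exists w, valid w /\ (exists y, F y /\ x = phiw w y) /\ rm * rho < rw w <= rho.
Proof.
  intros Hrm Hrmi HrM HrMi m. induction m as [|m IH]; intros x Hx rho Hrho.
  - simpl in Hrho. lra.
  - destruct (Req_dec rho 1) as [->|Hne].
    + exists nil. split; [constructor|]. split; [exists x; auto|]. simpl; lra.
    + destruct (F_dec x Hx) as [i [Hi [x1 [Hx1 E]]]]. pose proof (r_bounds i Hi). pose proof (Hrmi i Hi). pose proof (HrMi i Hi).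
      destruct (Rlt_dec (r i) rho).
      * exists (i :: nil). split; [constructor; auto|]. split; [exists x1; simpl; auto|]. simpl.
        assert (rho < 1) by (destruct Hrho; lra). assert (rm * rho < rm) by nra. nra.
      * assert (Hrho' : rM ^ m < rho / r i <= 1).
        { split.
          - simpl in Hrho. apply (Rmult_lt_reg_r (r i)); [lra|]. unfold Rdiv. rewrite Rmult_assoc, Rinv_l, Rmult_1_r by lra.
            pose proof (pow_lt rM m ltac:(lra)). nra.
          - apply (Rmult_le_reg_r (r i)); [lra|]. unfold Rdiv. rewrite Rmult_assoc, Rinv_l by lra. lra. }
        destruct (IH x1 Hx1 _ Hrho') as [w [Hw [[y [Hy E1]] [Hr1 Hr2]]]].
        exists (i :: w). split; [constructor; auto|]. split; [exists y; split; auto; simpl; rewrite <- E1; auto|].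
        simpl. split.
        -- apply (Rmult_lt_compat_l (r i)) in Hr1; [|lra].
           replace (r i * (rm * (rho / r i))) with (rm * rho) in Hr1 by (field; lra). lra.
        -- apply (Rmult_le_compat_l (r i)) in Hr2; [|lra].
           replace (r i * (rho / r i)) with rho in Hr2 by (field; lra). lra.
Qed.

Lemma address' rm rM : 0 < rm < 1 -> (forall i, (i < n)%nat -> rm <= r i) -> 0 < rM < 1 -> (forall i, (i < n)%nat -> r i <= rM) ->
  forall x, F x -> forall rho, 0 < rho <= 1 ->
  exists w, valid w /\ (exists y, F y /\ x = phiw w y) /\ rm * rho < rw w <= rho.
Proof.
  intros H1 H2 H3 H4 x Hx rho Hrho.
  destruct (pow_lt_1_zero rM ltac:(rewrite Rabs_right; lra) rho ltac:(lra)) as [m Hm].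
  specialize (Hm m (le_n m)). rewrite Rabs_right in Hm by (left; apply pow_lt; lra).
  apply (address rm rM H1 H2 H3 H4 m); auto. lra.
Qed.

Lemma poro_c a v : v <> (0,0) -> exists c0 rho0, 0 < c0 /\ 0 < rho0 /\
  forall t0, F (lpt a v t0) -> forall rho, 0 < rho <= rho0 ->
  exists be, t0 - rho <= be /\ be + c0 * rho <= t0 + rho /\
  forall t, be <= t <= be + c0 * rho -> ~ F (lpt a v t).
Proof.
  intros Hv. pose proof (nrm_pos v Hv) as Hnv. set (nv := nrm v) in *.
  destruct sep_ex as [d [Hd Hsep]].
  set (eps := d / 2).
  destruct (no_dense eps ltac:(unfold eps; lra)) as [c [Hc Hnd]].
  destruct rmin_ex as [rm0 [Hrm0 Hrmi0]].
  set (rm := Rmin rm0 (1/2)).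
  assert (Hrm : 0 < rm < 1) by (unfold rm; split; [apply Rmin_glb_lt; lra| pose proof (Rmin_r rm0 (1/2)); lra]).
  assert (Hrmi : forall i, (i < n)%nat -> rm <= r i) by (intros; unfold rm; pose proof (Rmin_l rm0 (1/2)); pose proof (Hrmi0 i H); lra).
  destruct rmax_ex as [rM [HrM HrMi]].
  exists (c * rm / eps), (eps / nv). split; [apply Rdiv_lt_0_compat; [nra| unfold eps; lra]|].
  split; [apply Rdiv_lt_0_compat; [unfold eps; lra| auto]|].
  intros t0 Ht0 rho Hrho.
  assert (Heps : 0 < eps) by (unfold eps; lra).
  set (rho' := rho * nv / eps).
  assert (Hrho' : 0 < rho' <= 1).
  { unfold rho'. split. { apply Rdiv_lt_0_compat; nra. }
    destruct Hrho as [_ H]. apply (Rmult_le_compat_r nv) in H; [|lra].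
    replace (eps / nv * nv) with eps in H by (field; lra). apply (Rmult_le_reg_r eps); [lra|].
    field_simplify; lra. }
  destruct (address' rm rM Hrm Hrmi HrM HrMi _ Ht0 rho' Hrho') as [w [Hw [[y [Hy Ey]] [Hr1 Hr2]]]].
  set (R0 := rw w) in *.
  destruct (rw_bnd w Hw) as [HR0 _]. fold R0 in HR0.
  set (u := R0 / nv).
  assert (Hu : 0 < u) by (unfold u; apply Rdiv_lt_0_compat; lra).
  set (S := fun tau => -eps <= tau <= eps /\ F (lpt a v (t0 + tau * u))).
  assert (HS : forall tau, S tau -> exists y', F y' /\ lpt a v (t0 + tau * u) = phiw w y').
  { intros tau [Htau Hf]. destruct (sep_word d Hd Hsep w Hw y _ Hy Hf) as [y' [Hy' E']].
    - rewrite <- Ey. rewrite dist2_lpt. replace (t0 - (t0 + tau * u)) with (- (tau * u)) by ring.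
      rewrite Rabs_Ropp, Rabs_mult, (Rabs_right u) by lra. unfold u.
      assert (Rabs tau <= eps) by (apply Rabs_le; lra). unfold eps in *.
      change (rw w) with R0. change (nrm v) with nv. replace (Rabs tau * (R0 / nv) * nv) with (Rabs tau * R0) by (field; lra). assert (Rabs tau * R0 <= d/2 * R0) by (apply Rmult_le_compat_r; lra). assert (0 < R0 * d) by (apply Rmult_lt_0_compat; lra). lra.
    - exists y'; auto. }
  set (g := fun tau => epsilon (inhabits (0,0)) (fun y' => F y' /\ lpt a v (t0 + tau * u) = phiw w y')).
  assert (Hg : forall tau, S tau -> F (g tau) /\ lpt a v (t0 + tau * u) = phiw w (g tau)).
  { intros tau Ht. unfold g. apply epsilon_spec. apply HS; auto. }
  destruct (Hnd S g) as [al [Hal1 [Hal2 Hal3]]].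
  - intros s Hs. split; [apply Hs| apply Hg; auto].
  - intros s t Hs Ht. destruct (Hg s Hs) as [_ Es]. destruct (Hg t Ht) as [_ Et].
    assert (R0 * dist2 (g s) (g t) = R0 * Rabs (s - t)).
    { unfold R0. rewrite <- phiw_dist by auto. rewrite <- Es, <- Et, dist2_lpt.
      replace (t0 + s * u - (t0 + t * u)) with ((s - t) * u) by ring.
      rewrite Rabs_mult, (Rabs_right u) by lra. unfold u. change (nrm v) with nv. change (rw w) with R0. field. lra. }
    apply Rmult_eq_reg_l in H; lra.
  - exists (t0 + al * u).
    assert (Hcu : c * rm / eps * rho <= c * u).
    { unfold u. replace (c * rm / eps * rho) with (c * (rm * rho') / nv) by (unfold rho'; field; split; lra).
      unfold Rdiv. rewrite Rmult_assoc. apply Rmult_le_compat_l; [lra|]. apply Rmult_le_compat_r.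
      { left; apply Rinv_0_lt_compat; lra. } lra. }
    assert (Hu2 : eps * u <= rho).
    { unfold u. replace rho with (eps * (rho' / nv)) by (unfold rho'; field; split; lra).
      apply Rmult_le_compat_l; [lra|]. unfold Rdiv. apply Rmult_le_compat_r; [left; apply Rinv_0_lt_compat; lra| lra]. }
    split; [nra|]. split; [nra|].
    intros t Ht HF'. apply (Hal3 ((t - t0) / u)).
    + split.
      * apply (Rmult_le_reg_r u); [lra|]. field_simplify; lra.
      * apply (Rmult_le_reg_r u); [lra|]. field_simplify; nra.
    + unfold S. split.
      * split.
        -- apply (Rmult_le_reg_r u); [lra|]. field_simplify; nra.
        -- apply (Rmult_le_reg_r u); [lra|]. field_simplify; nra.
      * replace (t0 + (t - t0) / u * u) with t by (field; lra). auto.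
Qed.

Lemma E_bounded a v : v <> (0,0) -> exists T, 0 < T /\ forall t, F (lpt a v t) -> -T <= t <= T.
Proof.
  intros Hv. pose proof (nrm_pos v Hv) as Hnv.
  destruct F_bounded as [B [HB HBd]].
  destruct (classic (exists t1, F (lpt a v t1))) as [[t1 Ht1]|Hno].
  - exists (Rabs t1 + B / nrm v + 1). split. { pose proof (Rabs_pos t1). pose proof (Rdiv_lt_0_compat B (nrm v) HB Hnv). lra. }
    intros t Ht. pose proof (HBd _ _ Ht Ht1) as Hd. rewrite dist2_lpt in Hd.
    assert (Rabs (t - t1) <= B / nrm v).
    { apply (Rmult_le_reg_r (nrm v)); auto. unfold Rdiv. rewrite Rmult_assoc, Rinv_l, Rmult_1_r by lra. auto. }
    apply Rabs_bnd in H. pose proof (Rle_abs t1). pose proof (Rle_abs (-t1)). rewrite Rabs_Ropp in H1. lra.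
  - exists 1. split; [lra|]. intros t Ht. exfalso; eauto.
Qed.

Lemma poro_i a v : v <> (0,0) -> exists g l0, 0 < g /\ g <= 1/2 /\ 0 < l0 /\
  forall x l, 0 < l <= l0 -> exists be, x <= be /\ be + g * l <= x + l /\
  forall t, be <= t <= be + g * l -> ~ F (lpt a v t).
Proof.
  intros Hv. destruct (poro_c a v Hv) as [c0 [rho0 [Hc0 [Hrho0 Hp]]]].
  exists (Rmin (c0/4) (1/2)), (4 * rho0).
  pose proof (Rmin_l (c0/4) (1/2)). pose proof (Rmin_r (c0/4) (1/2)).
  set (g := Rmin (c0/4) (1/2)) in *.
  assert (0 < g) by (unfold g; apply Rmin_glb_lt; lra).
  split; [auto| split; [auto| split; [lra|]]].
  intros x l Hl.
  destruct (classic (exists t0, x + l/4 <= t0 <= x + 3*l/4 /\ F (lpt a v t0))) as [[t0 [Ht0 Ft0]]|Hno].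
  - destruct (Hp t0 Ft0 (l/4) ltac:(lra)) as [be [Hb1 [Hb2 Hb3]]].
    exists be. split; [lra|]. assert (g * l <= c0 * (l/4)) by nra. split; [lra|].
    intros t Ht. apply Hb3. lra.
  - exists (x + l/4). split; [lra|]. split; [nra|]. intros t Ht Ft. apply Hno. exists t. split; auto. nra.
Qed.

Lemma child a v : v <> (0,0) -> exists K l0, (2 <= K)%nat /\ 0 < l0 /\
  forall x l, 0 < l <= l0 -> exists j, (j < K)%nat /\
  forall t, x + INR j * (l / INR K) <= t <= x + INR (S j) * (l / INR K) -> ~ F (lpt a v t).
Proof.
  intros Hv. destruct (poro_i a v Hv) as [g [l0 [Hg [Hg2 [Hl0 Hp]]]]].
  destruct (nat_arch (2 / g)) as [K0 HK0].
  exists (Nat.max K0 2), l0. split; [lia|]. split; [auto|].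
  set (K := Nat.max K0 2).
  assert (HK : 2 <= INR K * g).
  { assert (INR K0 <= INR K) by (apply le_INR; unfold K; lia).
    assert (2 / g * g = 2) by (field; lra). nra. }
  assert (HKp : 0 < INR K) by (apply lt_0_INR; unfold K; lia).
  intros x l Hl. destruct (Hp x l Hl) as [be [H1 [H2 H3]]].
  set (h := l / INR K).
  assert (Hh : 0 < h) by (unfold h; apply Rdiv_lt_0_compat; lra).
  assert (HKh : INR K * h = l) by (unfold h; field; lra).
  assert (H2h : 2 * h <= g * l) by (rewrite <- HKh; nra).
  destruct (locate x h (Nat.pred K) be Hh) as [j0 [Hj0 Hb]].
  { replace (S (Nat.pred K)) with K by (unfold K; lia). nra. }
  exists (S j0). split.
  - assert (INR (S (S j0)) <= INR K).
    { apply (Rmult_le_reg_r h); auto. rewrite !S_INR in *. nra. }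
    apply INR_le in H. lia.
  - intros t Ht. apply H3. rewrite !S_INR in *. nra.
Qed.

Lemma cover a v : v <> (0,0) -> exists K M lam, (2 <= K)%nat /\ 0 < lam /\ forall k, exists l : list R,
  (length l <= M * (K - 1) ^ k)%nat /\
  forall t, F (lpt a v t) -> exists x, In x l /\ x <= t <= x + lam * (1 / INR K) ^ k.
Proof.
  intros Hv. destruct (child a v Hv) as [K [l0 [HK [Hl0 Hch]]]].
  destruct (E_bounded a v Hv) as [T [HT HTb]].
  destruct (nat_arch (2 * T / l0)) as [M HM].
  assert (HMp : (1 <= M)%nat).
  { destruct M; [|lia]. simpl in HM. assert (0 < 2 * T / l0) by (apply Rdiv_lt_0_compat; lra). lra. }
  assert (HMr : 0 < INR M) by (apply lt_0_INR; lia).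
  set (lam := 2 * T / INR M).
  assert (Hlam : 0 < lam) by (unfold lam; apply Rdiv_lt_0_compat; lra).
  assert (Hlam0 : lam <= l0).
  { unfold lam. apply (Rmult_le_reg_r (INR M)); auto. unfold Rdiv. rewrite Rmult_assoc, Rinv_l, Rmult_1_r by lra.
    apply (Rmult_lt_compat_r l0) in HM; auto. unfold Rdiv in HM. rewrite Rmult_assoc, Rinv_l, Rmult_1_r in HM by lra. lra. }
  assert (HKr : 1 < INR K) by (apply lt_1_INR; lia).
  exists K, M, lam. split; [auto| split; [auto|]].
  assert (Hstep : forall h, 0 < h <= l0 -> forall l : list R, exists l' : list R,
     (length l' <= (K - 1) * length l)%nat /\
     forall t, F (lpt a v t) -> (exists x, In x l /\ x <= t <= x + h) ->
     exists x', In x' l' /\ x' <= t <= x' + h / INR K).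
  { intros h Hh l. induction l as [|x l IH].
    - exists nil. split; [simpl; lia|]. intros t _ [x [[] _]].
    - destruct IH as [l1 [Hlen1 Hl1]].
      destruct (Hch x h Hh) as [j0 [Hj0 Hgap]].
      set (idx := seq 0 j0 ++ seq (S j0) (K - S j0)).
      exists (map (fun j => x + INR j * (h / INR K)) idx ++ l1). split.
      + rewrite length_app, length_map. unfold idx. rewrite length_app, !length_seq. simpl. lia.
      + intros t Ft [x' [[<-|Hin] Hx']].
        * destruct (locate x (h / INR K) (Nat.pred K) t) as [j [Hj Htj]].
          { apply Rdiv_lt_0_compat; lra. }
          { replace (INR (S (Nat.pred K)) * (h / INR K)) with h. { lra. }
            replace (S (Nat.pred K)) with K by lia. field. lra. }
          exists (x + INR j * (h / INR K)). split.
          -- apply in_or_app. left. apply (in_map (fun j => x + INR j * (h / INR K))). unfold idx. apply in_or_app.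
             destruct (Nat.lt_ge_cases j j0).
             ++ left. apply in_seq. lia.
             ++ right. apply in_seq. destruct (Nat.eq_dec j j0) as [->|Hne].
                ** exfalso. apply (Hgap t Htj Ft).
                ** lia.
          -- rewrite S_INR in Htj. lra.
        * destruct (Hl1 t Ft) as [x'' [H1 H2]]. { exists x'; auto. }
          exists x''. split; auto. apply in_or_app; auto. }
  intro k. induction k as [|k IH].
  - exists (map (fun j => -T + INR j * lam) (seq 0 M)). split.
    + rewrite length_map, length_seq. simpl. lia.
    + intros t Ft. destruct (HTb t Ft).
      destruct (locate (-T) lam (Nat.pred M) t Hlam) as [j [Hj Htj]].
      { replace (S (Nat.pred M)) with M by lia. unfold lam. replace (INR M * (2 * T / INR M)) with (2 * T) by (field; lra). lra. }
      exists (-T + INR j * lam). split.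
      * apply (in_map (fun j => -T + INR j * lam)). apply in_seq. lia.
      * simpl. rewrite S_INR in Htj. lra.
  - destruct IH as [l [Hlen Hl]].
    assert (Hh : 0 < lam * (1 / INR K) ^ k <= l0).
    { assert (0 < (1 / INR K) ^ k) by (apply pow_lt; apply Rdiv_lt_0_compat; lra).
      assert ((1 / INR K) ^ k <= 1). { apply pow_le1. split; [left; apply Rdiv_lt_0_compat; lra|]. apply div_le_self; lra. } split; nra. }
    destruct (Hstep _ Hh l) as [l' [Hlen' Hl']]. exists l'. split.
    + simpl. pose proof (Nat.mul_le_mono_l _ _ (K - 1) Hlen). nia.
    + intros t Ft. destruct (Hl' t Ft (Hl t Ft)) as [x' [Hx' Ht]]. exists x'. split; auto.
      replace (lam * (1 / INR K) ^ S k) with (lam * (1 / INR K) ^ k / INR K) by (simpl; field; lra). lra.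
Qed.

Lemma null_s a v : v <> (0,0) -> exists s, 0 < s < 1 /\ hausdorff_null s (fun p => F p /\ affine_line a v p).
Proof.
  intros Hv. pose proof (nrm_pos v Hv) as Hnv. set (nv := nrm v) in *.
  destruct (cover a v Hv) as [K [M [lam [HK [Hlam Hcov]]]]].
  set (Kr := INR K).
  assert (HKr : 2 <= Kr) by (unfold Kr; replace 2 with (INR 2) by (simpl; ring); apply le_INR; auto).
  assert (HlnK : 0 < ln Kr) by (rewrite <- ln_1; apply ln_increasing; lra).
  assert (HlnK1 : 0 <= ln (Kr - 1)).
  { destruct (Req_dec (Kr - 1) 1) as [E|E]. { rewrite E, ln_1; lra. } rewrite <- ln_1. left. apply ln_increasing; lra. }
  assert (HlnKK : ln (Kr - 1) < ln Kr) by (apply ln_increasing; lra).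
  set (s := (1 + ln (Kr - 1) / ln Kr) / 2).
  assert (Hrat : ln (Kr - 1) / ln Kr < 1).
  { apply (Rmult_lt_reg_r (ln Kr)); auto. unfold Rdiv. rewrite Rmult_assoc, Rinv_l, Rmult_1_r by lra. lra. }
  assert (Hrat0 : 0 <= ln (Kr - 1) / ln Kr) by (apply Rmult_le_pos; [lra| left; apply Rinv_0_lt_compat; lra]).
  assert (Hs : 0 < s < 1) by (unfold s; lra).
  exists s. split; auto.
  set (theta := Rpower (1 / Kr) s).
  assert (Htheta0 : 0 < theta) by apply Rpower_pos.
  assert (Hrho : (Kr - 1) * theta < 1).
  { assert (E1 : theta = exp (- (s * ln Kr))).
    { unfold theta, Rpower. f_equal. replace (1 / Kr) with (/ Kr) by (field; lra). rewrite ln_Rinv by lra. ring. }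
    rewrite E1. rewrite <- (exp_ln (Kr - 1)) at 1 by lra. rewrite <- exp_plus.
    assert (s * ln Kr = (ln Kr + ln (Kr - 1)) / 2) by (unfold s; field; lra).
    apply Rlt_le_trans with (exp 0); [apply exp_increasing; lra| rewrite exp_0; lra]. }
  assert (Htheta1 : theta < 1) by (assert (theta * 1 <= theta * (Kr - 1)) by (apply Rmult_le_compat_l; lra); lra).
  set (q := Rpower (1/2) s).
  assert (Hq : 0 < q < 1).
  { split; [apply Rpower_pos|]. unfold q, Rpower.
    assert (ln (1/2) < 0) by (rewrite <- ln_1; apply ln_increasing; lra).
    apply Rlt_le_trans with (exp 0); [apply exp_increasing; nra| rewrite exp_0; lra]. }
  intros dl ep Hdl Hep.
  set (C1 := Rpower (lam * nv) s). assert (HC1 : 0 < C1) by apply Rpower_pos.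
  set (C2 := 1 / (1 - q)). assert (HC2 : 0 < C2) by (unfold C2; apply Rdiv_lt_0_compat; lra).
  assert (HK1 : 0 < 1 / Kr < 1).
  { split; [apply Rdiv_lt_0_compat; lra|]. apply (Rmult_lt_reg_r Kr); [lra|]. unfold Rdiv. rewrite Rmult_assoc, Rinv_l by lra. lra. }
  destruct (small_pow (1 / Kr) (lam * nv) dl ltac:(lra) ltac:(nra) Hdl) as [N1 HN1].
  destruct (small_pow ((Kr - 1) * theta) (C1 * INR M) (ep / 2) ltac:(split; [apply Rmult_le_pos; lra|auto])
    ltac:(apply Rmult_le_pos; [lra| apply pos_INR]) ltac:(lra)) as [N2 HN2].
  destruct (small_pow theta (C1 * C2) (ep / 2) ltac:(lra) ltac:(nra) ltac:(lra)) as [N3 HN3].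
  set (k := (N1 + N2 + N3)%nat).
  specialize (HN1 k ltac:(unfold k; lia)). specialize (HN2 k ltac:(unfold k; lia)). specialize (HN3 k ltac:(unfold k; lia)).
  destruct (Hcov k) as [l [Hlen Hl]].
  set (L := length l) in *.
  set (hk := lam * (1 / INR K) ^ k) in *.
  assert (Hhk : 0 < hk) by (unfold hk; apply Rmult_lt_0_compat; [lra| apply pow_lt; fold Kr; lra]).
  set (D0 := hk * nv).
  assert (HD0 : 0 < D0) by (unfold D0; nra).
  assert (HD0d : D0 < dl) by (unfold D0, hk; fold Kr; nra).
  exists (fun m p => (m < L)%nat /\ exists t, nth m l 0 <= t <= nth m l 0 + hk /\ p = lpt a v t).
  exists (fun m => if Nat.ltb m L then D0 else D0 * (1/2) ^ m).
  split; [|split; [|split]].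
  - intros p [Fp [t Et]]. assert (Ep : p = lpt a v t) by (rewrite Et; reflexivity). subst p.
    destruct (Hl t Fp) as [x [Hx Hxt]]. destruct (In_nth l x 0 Hx) as [m [Hm Em]].
    exists m. split; auto. exists t. rewrite Em. split; auto.
  - intros m. destruct (Nat.ltb m L); [lra|].
    assert (0 < (1/2)^m <= 1) by (split; [apply pow_lt; lra| apply pow_le1; lra]). split; nra.
  - intros m p p' [Hm [t [Ht Ep]]] [_ [t' [Ht' Ep']]]. subst p p'.
    apply Nat.ltb_lt in Hm. rewrite Hm. rewrite dist2_lpt. fold nv. unfold D0.
    apply Rmult_le_compat_r; [lra|]. apply Rabs_le. lra.
  - intros N.
    assert (Hpt : forall m, Rpower (if Nat.ltb m L then D0 else D0 * (1/2) ^ m) s <=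
              (if Nat.ltb m L then 1 else 0) * Rpower D0 s + q ^ m * Rpower D0 s).
    { intros m. pose proof (Rpower_pos D0 s). pose proof (pow_le q m ltac:(lra)).
      destruct (Nat.ltb m L). { nra. }
      rewrite <- Rpower_mult_distr by (try apply pow_lt; lra). unfold q. rewrite Rpower_geom by lra. lra. }
    eapply Rle_trans. { apply sum_Rle. intros m _. apply Hpt. }
    rewrite plus_sum, <- !scal_sum, count_sum.
    assert (HL : INR (Nat.min (S N) L) <= INR M * (Kr - 1) ^ k).
    { apply Rle_trans with (INR L). { apply le_INR; lia. }
      apply Rle_trans with (INR (M * (K - 1) ^ k)). { apply le_INR; auto. }
      rewrite mult_INR, pow_INR, minus_INR by lia. fold Kr. simpl. lra. }
    assert (HD0s : Rpower D0 s = C1 * theta ^ k).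
    { unfold D0, hk. replace (lam * (1 / INR K) ^ k * nv) with ((lam * nv) * (1 / Kr) ^ k) by (unfold Kr; ring).
      rewrite <- Rpower_mult_distr by (try apply pow_lt; nra). unfold theta. rewrite Rpower_geom by lra. reflexivity. }
    pose proof (geom_sum q N ltac:(lra)).
    rewrite HD0s.
    assert (0 <= C1 * theta ^ k) by (pose proof (pow_le theta k ltac:(lra)); nra).
    apply Rle_trans with (C1 * theta ^ k * (INR M * (Kr - 1) ^ k) + C1 * theta ^ k * C2).
    { apply Rplus_le_compat; apply Rmult_le_compat_l; auto. }
    rewrite Rpow_mult_distr in HN2.
    assert (C1 * theta ^ k * (INR M * (Kr - 1) ^ k) = C1 * INR M * ((Kr - 1) ^ k * theta ^ k)) by ring.
    nra.
Qed.

End Main.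

Theorem corollary3p2 (n : nat) (phi : nat -> pt -> pt) (r : nat -> R) (F : pt -> Prop)
  (Hn : (1 <= n)%nat)
  (Hsim : forall i, (i < n)%nat -> contracting_similarity (phi i) (r i))
  (HF : is_attractor n phi F)
  (Hssc : SSC n phi F) :
  forall a v : pt, v <> (0, 0) ->
  exists d, is_hausdorff_dim (fun p => F p /\ affine_line a v p) d /\ d < 1.
Proof.
  intros a v Hv.
  destruct (null_s n phi r F Hsim HF Hssc a v Hv) as [s0 [Hs0 Hnull]].
  set (A := fun p => F p /\ affine_line a v p) in *.
  set (P := fun x => exists s, 0 <= s /\ hausdorff_null s A /\ x = - s).
  destruct (completeness P) as [m [Hub Hlub]].
  - exists 0. intros x [s [Hs [_ ->]]]. lra.
  - exists (- s0). exists s0. split; [lra| split; auto].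
  - exists (- m). split; [split|].
    + intros s Hs Hns. assert (- s <= m) by (apply Hub; exists s; auto). lra.
    + intros e He. assert (m <= - e).
      { apply Hlub. intros x [s [Hs [Hns ->]]]. specialize (He s Hs Hns). lra. }
      lra.
    + assert (- s0 <= m) by (apply Hub; exists s0; split; [lra| split; auto]). lra.
Qed.
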